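(* Let $n\ge2$, $F\in GL^+(n)$, $\mu>0$, $\mu_c\ge0$. (i) If $\mu=\mu_c$, then $R\in SO(n)$ is a critical point of $\widetilde W_{\mu,\mu_c}(\cdot;F)$ if and only if $FR^T=RF^T$. (ii) If $\mu\ne\mu_c$, then $R\in SO(n)$ is a critical point of $\widetilde W_{\mu,\mu_c}(\cdot;F)$ if and only if $R$ is a critical point of $\widetilde W_{1,0}(\cdot;\widehat F_{\mu,\mu_c})$, which holds if and only if $$\widehat F_{\mu,\mu_c}R^T\widehat F_{\mu,\mu_c}R^T-R\widehat F_{\mu,\mu_c}^TR\widehat F_{\mu,\mu_c}^T=2\big(\widehat F_{\mu,\mu_c}R^T-R\widehat F_{\mu,\mu_c}^T\big).$$
   Context: $\mathrm{sym}(Y)=\tfrac12(Y+Y^T)$, $\mathrm{skew}(Y)=\tfrac12(Y-Y^T)$, $\|Y\|^2=\mathrm{tr}(Y^TY)$. For $F\in GL^+(n)$, $\mu>0$, $\mu_c\ge0$: $\widetilde W_{\mu,\mu_c}(R;F)=\mu\|\mathrm{sym}(R^TF-\mathbb I_n)\|^2+\mu_c\|\mathrm{skew}(R^TF-\mathbb I_n)\|^2$ on $SO(n)$; for any invertible $G$, $\widetilde W_{1,0}(R;G)=\|\mathrm{sym}(R^TG-\mathbb I_n)\|^2$. $\widehat F_{\mu,\mu_c}=\frac{\mu-\mu_c}{\mu}F$. Critical points are those of the restriction to the submanifold $SO(n)\subset\mathcal M_{n\times n}(\mathbb R)$. *)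

(* Defs.v *)
From HB Require Import structures.
From mathcomp Require Import all_boot all_order all_algebra.
Set Implicit Arguments. Unset Strict Implicit. Unset Printing Implicit Defensive.
Import Order.TTheory GRing.Theory Num.Theory.
Local Open Scope ring_scope.

Section Defs.
Variables (R : realFieldType) (n : nat).

Definition msym (Y : 'M[R]_n) : 'M[R]_n := 2%:R^-1 *: (Y + Y^T).
Definition mskew (Y : 'M[R]_n) : 'M[R]_n := 2%:R^-1 *: (Y - Y^T).

Definition mxnorm2 (Y : 'M[R]_n) : R := \tr (Y^T *m Y).

Definition Wt (mu muc : R) (F : 'M[R]_n) (Rm : 'M[R]_n) : R :=
  mu * mxnorm2 (msym (Rm^T *m F - 1%:M)) + muc * mxnorm2 (mskew (Rm^T *m F - 1%:M)).

Definition Fhat (mu muc : R) (F : 'M[R]_n) : 'M[R]_n := ((mu - muc) / mu) *: F.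

Definition is_SO (Rm : 'M[R]_n) : Prop := Rm^T *m Rm = 1%:M /\ \det Rm = 1.
Definition is_GLplus (F : 'M[R]_n) : Prop := 0 < \det F.

Definition has_deriv (phi : R -> R) (t0 L : R) : Prop :=
  forall e, 0 < e -> exists2 d, 0 < d &
    forall t, 0 < `|t - t0| < d -> `|(phi t - phi t0) / (t - t0) - L| < e.

Definition mx_has_deriv (gamma : R -> 'M[R]_n) (t0 : R) (V : 'M[R]_n) : Prop :=
  forall i j, has_deriv (fun t => gamma t i j) t0 (V i j).

(* Rm is a critical point of the restriction of f to the submanifold SO(n):
   for every curve gamma with gamma(0) = Rm, lying in SO(n) near 0 and
   differentiable at 0, the derivative of f o gamma at 0 vanishes. *)
Definition critical_SO (f : 'M[R]_n -> R) (Rm : 'M[R]_n) : Prop :=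
  forall (gamma : R -> 'M[R]_n) (V : 'M[R]_n),
    gamma 0 = Rm ->
    (exists2 d, 0 < d & forall t, `|t| < d -> is_SO (gamma t)) ->
    mx_has_deriv gamma 0 V ->
    has_deriv (fun t => f (gamma t)) 0 0.

End Defs.

(* Main.v *)
Require Import Defs.
From HB Require Import structures.
From mathcomp Require Import all_boot all_order all_algebra.
From mathcomp Require Import ring lra.
Import Order.TTheory GRing.Theory Num.Theory.
Local Open Scope ring_scope.

Module Helpers.

Set Implicit Arguments. Unset Strict Implicit.

Section Calc.
Variable R : realFieldType.


Definition lim0 (g : R -> R) (t0 l : R) := forall e, 0 < e -> exists2 d, 0 < d &
  forall t, 0 < `|t - t0| < d -> `|g t - l| < e.

Lemma lim0_ext g h t0 l d0 : 0 < d0 ->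
  (forall t, 0 < `|t - t0| < d0 -> g t = h t) -> lim0 g t0 l -> lim0 h t0 l.
Proof.
move=> d0p eq hg e ep; have [d dp hd] := hg e ep.
exists (Order.min d d0); first by rewrite lt_min dp d0p.
move=> t /andP[t1]; rewrite lt_min => /andP[t2 t3].
by rewrite -eq ?t1 ?t3 // hd // t1 t2.
Qed.

Lemma lim0_eq g t0 l l' : lim0 g t0 l -> l = l' -> lim0 g t0 l'.
Proof. by move=> ? <-. Qed.

Lemma lim0_cst c t0 : lim0 (fun _ => c) t0 c.
Proof. by move=> e ep; exists 1 => // t _; rewrite subrr normr0. Qed.

Lemma lim0_id t0 : lim0 id t0 t0.
Proof. by move=> e ep; exists e => // t /andP[]. Qed.

Lemma lim0_add g h t0 a b : lim0 g t0 a -> lim0 h t0 b -> lim0 (fun t => g t + h t) t0 (a + b).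
Proof.
move=> hg hh e ep.
have e2 : 0 < e / 2 by rewrite divr_gt0.
have [d1 d1p h1] := hg _ e2; have [d2 d2p h2] := hh _ e2.
exists (Order.min d1 d2); first by rewrite lt_min d1p d2p.
move=> t /andP[t1]; rewrite lt_min => /andP[t2 t3].
have := h1 t; rewrite t1 t2 => /(_ isT) u1.
have := h2 t; rewrite t1 t3 => /(_ isT) u2.
have := ler_normD (g t - a) (h t - b).
have -> : g t - a + (h t - b) = g t + h t - (a + b) by rewrite opprD addrACA.
lra.
Qed.

Lemma lim0_mul g h t0 a b : lim0 g t0 a -> lim0 h t0 b -> lim0 (fun t => g t * h t) t0 (a * b).
Proof.
move=> hg hh e ep.
set k := e / (3 * (1 + `|a| + `|b|)).
have na := normr_ge0 a; have nb := normr_ge0 b.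
have kp : 0 < k by rewrite /k divr_gt0 //; lra.
set e1 := Order.min 1 k.
have e1p : 0 < e1 by rewrite /e1 lt_min kp ltr01.
have e11 : e1 <= 1 by rewrite /e1 ge_min lexx.
have e1k : e1 <= k by rewrite /e1 ge_min lexx orbT.
have [d1 d1p h1] := hg _ e1p; have [d2 d2p h2] := hh _ e1p.
exists (Order.min d1 d2); first by rewrite lt_min d1p d2p.
move=> t /andP[t1]; rewrite lt_min => /andP[t2 t3].
have := h1 t; rewrite t1 t2 => /(_ isT) u1.
have := h2 t; rewrite t1 t3 => /(_ isT) u2.
have eq : g t * h t - a * b = (g t - a) * (h t - b) + a * (h t - b) + b * (g t - a).
  by ring.
rewrite eq.
have n1 := ler_normD ((g t - a) * (h t - b) + a * (h t - b)) (b * (g t - a)).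
have n2 := ler_normD ((g t - a) * (h t - b)) (a * (h t - b)).
rewrite !normrM in n1 n2.
have k3 : k * (3 * (1 + `|a| + `|b|)) = e.
  rewrite /k divfK //; apply/eqP; lra.
have x1 := normr_ge0 (g t - a); have x2 := normr_ge0 (h t - b).
have p1 : `|g t - a| * `|h t - b| <= e1 * e1.
  by rewrite ler_pM // ltW.
have p2 : `|a| * `|h t - b| <= `|a| * e1 by rewrite ler_wpM2l // ltW.
have p3 : `|b| * `|g t - a| <= `|b| * e1 by rewrite ler_wpM2l // ltW.
have q1 : e1 * e1 <= e1 by rewrite ler_piMr // ltW.
have q2 : `|a| * e1 <= `|a| * k by rewrite ler_wpM2l.
have q3 : `|b| * e1 <= `|b| * k by rewrite ler_wpM2l.
have s1 : `|a| * `|h t - b| < `|a| * k + k.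
  lra.
nra.
Qed.

Lemma lim0_unique g t0 l1 l2 : lim0 g t0 l1 -> lim0 g t0 l2 -> l1 = l2.
Proof.
move=> h1 h2; apply/eqP; apply/negPn/negP => ne.
have ep : 0 < `|l1 - l2| / 2 by rewrite divr_gt0 // normr_gt0 subr_eq0.
have [d1 d1p u1] := h1 _ ep; have [d2 d2p u2] := h2 _ ep.
set d := Order.min d1 d2.
have dp : 0 < d by rewrite lt_min d1p d2p.
have dd1 : d <= d1 by rewrite ge_min lexx.
have dd2 : d <= d2 by rewrite ge_min lexx orbT.
have nt : `|t0 + d / 2 - t0| = d / 2 by rewrite addrAC subrr add0r ger0_norm // ltW // divr_gt0.
have v1 := u1 (t0 + d/2); have v2 := u2 (t0 + d/2).
rewrite nt in v1 v2.
have hd : 0 < d / 2 by rewrite divr_gt0.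
have hd1 : d / 2 < d1 by lra.
have hd2 : d / 2 < d2 by lra.
have w1 := v1 (introT andP (conj hd hd1)).
have w2 := v2 (introT andP (conj hd hd2)).
have := ler_normD (l1 - g (t0 + d/2)) (g (t0 + d/2) - l2).
rewrite distrC in w1.
have -> : l1 - g (t0 + d / 2) + (g (t0 + d / 2) - l2) = l1 - l2 by rewrite addrA subrK.
lra.
Qed.


Lemma hdE (phi : R -> R) t0 L :
  has_deriv phi t0 L <-> lim0 (fun t => (phi t - phi t0) / (t - t0)) t0 L.
Proof. by []. Qed.

Lemma hd_eq (phi : R -> R) t0 L L' : has_deriv phi t0 L -> L = L' -> has_deriv phi t0 L'.
Proof. by move=> ? <-. Qed.

Lemma hd_ext (phi psi : R -> R) t0 L : (forall t, phi t = psi t) -> has_deriv phi t0 L -> has_deriv psi t0 L.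
Proof.
move=> e h; rewrite hdE; apply: (lim0_ext ltr01 _ h) => t _; by rewrite !e.
Qed.

Lemma hd_loc (phi psi : R -> R) t0 L d0 : 0 < d0 -> (forall t, `|t - t0| < d0 -> phi t = psi t) ->
  has_deriv phi t0 L -> has_deriv psi t0 L.
Proof.
move=> dp e h; rewrite hdE; apply: (lim0_ext dp _ h) => t /andP[_ tl].
by rewrite !e // subrr normr0.
Qed.

Lemma hd_cst (c t0 : R) : has_deriv (fun _ => c) t0 0.
Proof.
rewrite hdE; apply: (lim0_ext ltr01 _ (lim0_cst 0 t0)) => t _; by rewrite subrr mul0r.
Qed.

Lemma hd_id (t0 : R) : has_deriv id t0 1.
Proof.
rewrite hdE; apply: (lim0_ext ltr01 _ (lim0_cst 1 t0)) => t /andP[h _].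
by rewrite divff // -normr_gt0.
Qed.

Lemma hd_add (phi psi : R -> R) t0 a b : has_deriv phi t0 a -> has_deriv psi t0 b ->
  has_deriv (fun t => phi t + psi t) t0 (a + b).
Proof.
move=> h1 h2; rewrite hdE; apply: (lim0_ext ltr01 _ (lim0_add h1 h2)) => t _.
by rewrite -mulrDl opprD addrACA.
Qed.

Lemma hd_cont (phi : R -> R) t0 a : has_deriv phi t0 a -> lim0 phi t0 (phi t0).
Proof.
move=> h.
have h2 := lim0_add (lim0_cst (phi t0) t0) (lim0_mul h (lim0_add (lim0_id t0) (lim0_cst (- t0) t0))).
apply: (lim0_ext ltr01 _ (lim0_eq h2 _)); last by rewrite subrr mulr0 addr0.
move=> t /andP[h0 _] /=; rewrite divfK ?subrKC //.
by rewrite -normr_gt0.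
Qed.

Lemma hd_mul (phi psi : R -> R) t0 a b : has_deriv phi t0 a -> has_deriv psi t0 b ->
  has_deriv (fun t => phi t * psi t) t0 (a * psi t0 + phi t0 * b).
Proof.
move=> h1 h2; rewrite hdE.
have h3 := lim0_add (lim0_mul h1 (hd_cont h2)) (lim0_mul (lim0_cst (phi t0) t0) h2).
apply: (lim0_ext ltr01 _ h3) => t _ /=.
by rewrite mulrAC mulrA -mulrDl; congr (_ / _); ring.
Qed.

Lemma hd_scal (c : R) (phi : R -> R) t0 a : has_deriv phi t0 a -> has_deriv (fun t => c * phi t) t0 (c * a).
Proof.
move=> h; apply: hd_eq (hd_mul (hd_cst c t0) h) _; ring.
Qed.

Lemma hd_sum (I : Type) (s : seq I) (F : I -> R -> R) (D : I -> R) t0 :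
  (forall i, has_deriv (F i) t0 (D i)) ->
  has_deriv (fun t => \sum_(i <- s) F i t) t0 (\sum_(i <- s) D i).
Proof.
move=> h; elim: s => [|x s IH].
  rewrite big_nil; apply: hd_ext (hd_cst 0 t0) => t; by rewrite big_nil.
rewrite big_cons; apply: hd_ext (hd_add (h x) IH) => t; by rewrite big_cons.
Qed.

Lemma hd_unique (phi : R -> R) t0 L1 L2 : has_deriv phi t0 L1 -> has_deriv phi t0 L2 -> L1 = L2.
Proof. exact: lim0_unique. Qed.


Section MxCalc.
Variable n : nat.
Implicit Type (A B : R -> 'M[R]_n).

Lemma mxd_eq A t0 (V V' : 'M[R]_n) : mx_has_deriv A t0 V -> V = V' -> mx_has_deriv A t0 V'.
Proof. by move=> ? <-. Qed.

Lemma mxd_ext A B t0 V : (forall t, A t = B t) -> mx_has_deriv A t0 V -> mx_has_deriv B t0 V.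
Proof. move=> e h i j; apply: hd_ext (h i j) => t; by rewrite e. Qed.

Lemma mxd_cst (M : 'M[R]_n) t0 : mx_has_deriv (fun _ => M) t0 0.
Proof. move=> i j; rewrite mxE; exact: hd_cst. Qed.

Lemma mxd_add A B t0 V W : mx_has_deriv A t0 V -> mx_has_deriv B t0 W ->
  mx_has_deriv (fun t => A t + B t) t0 (V + W).
Proof.
move=> h1 h2 i j; rewrite mxE.
apply: hd_ext (hd_add (h1 i j) (h2 i j)) => t; by rewrite mxE.
Qed.

Lemma mxd_scale (c : R) A t0 V : mx_has_deriv A t0 V ->
  mx_has_deriv (fun t => c *: A t) t0 (c *: V).
Proof.
move=> h i j; rewrite mxE.
apply: hd_ext (hd_scal c (h i j)) => t; by rewrite mxE.
Qed.

Lemma mxd_tr A t0 V : mx_has_deriv A t0 V -> mx_has_deriv (fun t => (A t)^T) t0 V^T.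
Proof.
move=> h i j; rewrite mxE.
apply: hd_ext (h j i) => t; by rewrite mxE.
Qed.

Lemma mxd_mul A B t0 V W : mx_has_deriv A t0 V -> mx_has_deriv B t0 W ->
  mx_has_deriv (fun t => A t *m B t) t0 (V *m B t0 + A t0 *m W).
Proof.
move=> h1 h2 i j; rewrite !mxE.
have := hd_sum (index_enum 'I_n) (fun k => hd_mul (h1 i k) (h2 k j)).
move=> h; apply: hd_eq; first apply: hd_ext h => t; first by rewrite mxE.
by rewrite big_split.
Qed.

Lemma hd_trace A t0 V : mx_has_deriv A t0 V -> has_deriv (fun t => \tr (A t)) t0 (\tr V).
Proof.
move=> h; exact: (hd_sum (index_enum 'I_n) (fun k => h k k)).
Qed.

End MxCalc.
End Calc.

Set Implicit Arguments. Unset Strict Implicit.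


Section Alg.
Variables (R : realFieldType) (n : nat).
Implicit Types (Y A P F Rm : 'M[R]_n).

Lemma tr_TT Y : \tr (Y^T *m Y^T) = \tr (Y *m Y).
Proof. by rewrite -trmx_mul mxtrace_tr. Qed.

Lemma tr_mulT (X Y : 'M[R]_n) : \tr (X^T *m Y) = \tr (Y^T *m X).
Proof. by rewrite -mxtrace_tr trmx_mul trmxK. Qed.

Lemma trZ (a : R) (M : 'M[R]_n) : (a *: M)^T = a *: M^T.
Proof. by apply/matrixP => i j; rewrite !mxE. Qed.
Lemma trD (M N : 'M[R]_n) : (M + N)^T = M^T + N^T.
Proof. by apply/matrixP => i j; rewrite !mxE. Qed.
Lemma trN (M : 'M[R]_n) : (- M)^T = - M^T.
Proof. by apply/matrixP => i j; rewrite !mxE. Qed.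
Lemma trB (M N : 'M[R]_n) : (M - N)^T = M^T - N^T.
Proof. by rewrite trD trN. Qed.
Lemma mxtrN (M : 'M[R]_n) : \tr (- M) = - \tr M.
Proof. by rewrite -scaleN1r mxtraceZ mulN1r. Qed.
Lemma mxtrB (M N : 'M[R]_n) : \tr (M - N) = \tr M - \tr N.
Proof. by rewrite mxtraceD mxtrN. Qed.

Lemma norm_sym Y : mxnorm2 (msym Y) = 2^-1 * (\tr (Y^T *m Y) + \tr (Y *m Y)).
Proof.
rewrite /mxnorm2 /msym trZ trD trmxK.
rewrite -scalemxAl -scalemxAr !mxtraceZ mulmxDl !mulmxDr !mxtraceD tr_TT.
rewrite (mxtrace_mulC Y Y^T).
have h2 : (2%:R : R) != 0 by rewrite pnatr_eq0.
by field.
Qed.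

Lemma norm_skew Y : mxnorm2 (mskew Y) = 2^-1 * (\tr (Y^T *m Y) - \tr (Y *m Y)).
Proof.
rewrite /mxnorm2 /mskew trZ trB trmxK.
rewrite -scalemxAl -scalemxAr !mxtraceZ mulmxBl !mulmxBr !mxtrB tr_TT.
rewrite (mxtrace_mulC Y Y^T).
have h2 : (2%:R : R) != 0 by rewrite pnatr_eq0.
by field.
Qed.


Lemma Wt_alt mu muc F X : Wt mu muc F X =
  (mu + muc) / 2%:R * \tr ((X^T *m F - 1%:M)^T *m (X^T *m F - 1%:M))
  + (mu - muc) / 2%:R * \tr ((X^T *m F - 1%:M) *m (X^T *m F - 1%:M)).
Proof. rewrite /Wt norm_sym norm_skew; by ring. Qed.

Definition Dfun mu muc F Rm V :=
  (mu + muc) * \tr ((V^T *m F)^T *m (Rm^T *m F - 1%:M))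
  + (mu - muc) * \tr ((V^T *m F) *m (Rm^T *m F - 1%:M)).

Lemma deriv_W mu muc F (gamma : R -> 'M[R]_n) V t0 : mx_has_deriv gamma t0 V ->
  has_deriv (fun t => Wt mu muc F (gamma t)) t0 (Dfun mu muc F (gamma t0) V).
Proof.
move=> h.
pose Y := fun t => (gamma t)^T *m F - 1%:M.
have hY : mx_has_deriv Y t0 (V^T *m F).
  have := mxd_add (mxd_mul (mxd_tr h) (mxd_cst F t0)) (mxd_scale (-1) (mxd_cst 1%:M t0)).
  move/mxd_ext => /(_ Y) hh; apply: mxd_eq; first apply: hh.
    by move=> t; rewrite /Y scaleN1r.
  by rewrite mulmx0 scaler0 !addr0.
have h1 := hd_trace (mxd_mul (mxd_tr hY) hY).
have h2 := hd_trace (mxd_mul hY hY).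
have := hd_add (hd_scal ((mu + muc) / 2%:R) h1) (hd_scal ((mu - muc) / 2%:R) h2).
move/hd_ext => /(_ (fun t => Wt mu muc F (gamma t))) hh; apply: hd_eq; first apply: hh.
  by move=> t; rewrite Wt_alt.
rewrite /Dfun /Y !mxtraceD (tr_mulT ((gamma t0)^T *m F - 1%:M)).
rewrite (mxtrace_mulC ((gamma t0)^T *m F - 1%:M)).
have h2n : (2%:R : R) != 0 by rewrite pnatr_eq0.
by field.
Qed.


Lemma tr_skew_sym A (S : 'M[R]_n) : A^T = - A -> S^T = S -> \tr (A *m S) = 0.
Proof.
move=> hA hS.
have e : \tr (A *m S) = - \tr (A *m S).
  by rewrite -{1}mxtrace_tr trmx_mul hA hS mulmxN mxtrN mxtrace_mulC.
lra.
Qed.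

Definition Nm mu muc F Rm :=
  (2%:R * mu) *: (Rm^T *m F) - (mu - muc) *: ((Rm^T *m F) *m (Rm^T *m F)).

Lemma Dfun_skew mu muc F Rm A : A^T = - A ->
  Dfun mu muc F Rm (Rm *m A) = \tr (A *m Nm mu muc F Rm).
Proof.
move=> hA; rewrite /Dfun /Nm.
set P := Rm^T *m F.
have e1 : (Rm *m A)^T *m F = - (A *m P) by rewrite trmx_mul hA -mulmxA mulNmx.
rewrite e1 trN trmx_mul hA mulmxN opprK.
have z : \tr (A *m (P *m P^T)) = 0.
  by apply: tr_skew_sym => //; rewrite trmx_mul trmxK.
have e2 : \tr (P^T *m A *m (P - 1%:M)) = - \tr (P^T *m A).
  rewrite mulmxBr mulmx1 mxtrB mxtrace_mulC mulmxA -mulmxA.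
  by rewrite mulmxA (mxtrace_mulC _ A) z sub0r.
have e3 : \tr (P^T *m A) = - \tr (A *m P).
  by rewrite tr_mulT hA mulNmx mxtrN.
rewrite e2 e3 mulNmx mxtrN mulmxBr mulmx1 mxtrB.
rewrite mulmxBr mxtrB -!scalemxAr mxtraceZ mxtraceZ !mulmxA.
by ring.
Qed.


Lemma tr_delta (i j : 'I_n) (N : 'M[R]_n) : \tr (delta_mx i j *m N) = N j i.
Proof.
rewrite /mxtrace (bigD1 i) //= [X in _ + X]big1 ?addr0.
  rewrite mxE (bigD1 j) //= big1 ?addr0; first by rewrite mxE !eqxx mul1r.
  by move=> l nl; rewrite mxE eqxx (negbTE nl) mul0r.
move=> k nk; rewrite mxE big1 // => l _.
by rewrite mxE (negbTE nk) mul0r.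
Qed.

Lemma tr_J (i j : 'I_n) (N : 'M[R]_n) :
  \tr ((delta_mx i j - delta_mx j i) *m N) = N j i - N i j.
Proof. by rewrite mulmxBl mxtrB !tr_delta. Qed.

Lemma sym_of_J (N : 'M[R]_n) :
  (forall i j : 'I_n, i != j -> \tr ((delta_mx i j - delta_mx j i) *m N) = 0) -> N^T = N.
Proof.
move=> h; apply/matrixP => i j; rewrite mxE.
have [->|ne] := eqVneq i j; first by [].
by have := h _ _ ne; rewrite tr_J => /eqP; rewrite subr_eq0 => /eqP.
Qed.


Section Rot.
Variables (i j : 'I_n).
Hypothesis ij : i != j.

Definition Pp : 'M[R]_n := delta_mx i i + delta_mx j j.
Definition Jm : 'M[R]_n := delta_mx i j - delta_mx j i.
Definition Hm (x y : R) : 'M[R]_n := 1%:M + x *: Pp + y *: Jm.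

Lemma Hm_mul x1 y1 x2 y2 :
  Hm x1 y1 *m Hm x2 y2 = Hm (x1 + x2 + x1 * x2 - y1 * y2) (y1 + y2 + x1 * y2 + y1 * x2).
Proof.
have ji : j != i by rewrite eq_sym.
rewrite /Hm /Pp /Jm !mulmxDl !mulmxDr -!scalemxAl -!scalemxAr !mul1mx !mulmx1.
rewrite !mulmxDl !mulmxDr ?mulmxBl ?mulmxBr ?mulmxDl ?mulmxDr.
rewrite ?mulmxN ?mulNmx.
rewrite !mul_delta_mx !mul_delta_mx_0 //.
apply/matrixP => k l; rewrite !mxE; ring.
Qed.

Lemma Hm_tr x y : (Hm x y)^T = Hm x (- y).
Proof.
rewrite /Hm /Pp /Jm !trD !trZ trB trD tr_scalar_mx !trmx_delta.
apply/matrixP => k l; rewrite !mxE; ring.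
Qed.

End Rot.


Definition cc (t : R) := (1 - t ^+ 2) / (1 + t ^+ 2).
Definition ss (t : R) := (2%:R * t) / (1 + t ^+ 2).

Lemma den_ge1 (t : R) : 1 <= 1 + t ^+ 2.
Proof. by rewrite lerDl sqr_ge0. Qed.

Lemma den_neq0 (t : R) : 1 + t ^+ 2 != 0.
Proof. have := den_ge1 t; apply: contraTneq => ->; by rewrite ler10. Qed.

Lemma cs1 (t : R) : cc t ^+ 2 + ss t ^+ 2 = 1.
Proof. rewrite /cc /ss; have := den_neq0 t => h; by field. Qed.

Lemma div_le (x w : R) : 1 <= w -> `|x / w| <= `|x|.
Proof.
move=> w1; have w0 : 0 < w by apply: lt_le_trans w1.
rewrite normrM normrV ?unitfE ?gt_eqF // (gtr0_norm w0).
rewrite ler_pdivrMr //; by rewrite ler_peMr.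
Qed.

Lemma hd_cc : has_deriv cc 0 0.
Proof.
move=> e ep; exists (e / 2%:R); first by rewrite divr_gt0.
move=> t /andP[t0 t1]; rewrite subr0 in t0 t1.
have tn : t != 0 by rewrite -normr_gt0.
have -> : (cc t - cc 0) / (t - 0) - 0 = (- (2%:R * t)) / (1 + t ^+ 2).
  rewrite /cc expr0n /= !subr0 addr0 divr1; have := den_neq0 t => h; field; by rewrite h tn.
apply: (le_lt_trans (div_le _ (den_ge1 t))).
rewrite normrN normrM (@ger0_norm _ 2%:R) //.
by rewrite -ltr_pdivlMl // mulrC.
Qed.

Lemma hd_ss : has_deriv ss 0 2%:R.
Proof.
move=> e ep; exists (Order.min 1 (e / 2%:R)); first by rewrite lt_min ltr01 divr_gt0.
move=> t /andP[t0]; rewrite lt_min => /andP[t1 t2]; rewrite subr0 in t0 t1 t2.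
have tn : t != 0 by rewrite -normr_gt0.
have -> : (ss t - ss 0) / (t - 0) - 2%:R = (- (2%:R * t ^+ 2)) / (1 + t ^+ 2).
  rewrite /ss expr0n /= mulr0 mul0r !subr0; have := den_neq0 t => h; field; by rewrite h tn.
apply: (le_lt_trans (div_le _ (den_ge1 t))).
rewrite normrN normrM (@ger0_norm _ 2%:R) // normrX.
have a0 := normr_ge0 t.
have : `|t| ^+ 2 <= `|t| by rewrite expr2 ger_pMr // ltW.
have : `|t| < e / 2%:R by [].
move=> h1 h2.
have : 2%:R * (e / 2%:R) = e by rewrite mulrC divfK // pnatr_eq0.
lra.
Qed.

Lemma mxd_sf (f : R -> R) (M : 'M[R]_n) t0 a : has_deriv f t0 a ->
  mx_has_deriv (fun t => f t *: M) t0 (a *: M).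
Proof.
move=> h k l; rewrite mxE.
apply: hd_eq; first apply: hd_ext (hd_mul h (hd_cst (M k l) t0)) => t; first by rewrite mxE.
by rewrite mulr0 addr0.
Qed.


Lemma Hm00 (i j : 'I_n) : Hm i j 0 0 = 1%:M.
Proof. by rewrite /Hm !scale0r !addr0. Qed.

Definition Hc (i j : 'I_n) (t : R) := Hm i j (cc t - 1) (ss t).

Lemma Hc_orth (i j : 'I_n) t : i != j -> (Hc i j t)^T *m Hc i j t = 1%:M.
Proof.
move=> ij; rewrite /Hc Hm_tr Hm_mul //.
have c := cs1 t.
have -> : cc t - 1 + (cc t - 1) + (cc t - 1) * (cc t - 1) - - ss t * ss t = 0.
  have -> : cc t - 1 + (cc t - 1) + (cc t - 1) * (cc t - 1) - - ss t * ss t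
     = cc t ^+ 2 + ss t ^+ 2 - 1 by ring.
  by rewrite c subrr.
have -> : - ss t + ss t + (cc t - 1) * ss t + - ss t * (cc t - 1) = 0 by ring.
exact: Hm00.
Qed.

Lemma Hc0 (i j : 'I_n) : Hc i j 0 = 1%:M.
Proof.
rewrite /Hc /cc /ss expr0n /= mulr0 mul0r addr0 subr0 divr1 subrr; exact: Hm00.
Qed.

Lemma mxd_Hc (i j : 'I_n) : mx_has_deriv (Hc i j) 0 (2%:R *: Jm i j).
Proof.
have h := mxd_add (mxd_add (mxd_cst 1%:M 0) (mxd_sf (Pp i j) (hd_add hd_cc (hd_cst (-1) 0))))
   (mxd_sf (Jm i j) hd_ss).
apply: mxd_eq; first apply: mxd_ext h => t; first by [].
by rewrite addr0 scale0r !add0r.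
Qed.

Lemma SO_mul (A B : 'M[R]_n) : is_SO A -> is_SO B -> is_SO (A *m B).
Proof.
move=> [a1 a2] [b1 b2]; split; last by rewrite det_mulmx a2 b2 mulr1.
by rewrite trmx_mul mulmxA -(mulmxA B^T) a1 mulmx1 b1.
Qed.

Lemma orth_SO2 (H : 'M[R]_n) : H^T *m H = 1%:M -> is_SO (H *m H).
Proof.
move=> h; split.
  by rewrite trmx_mul mulmxA -(mulmxA H^T) h mulmx1 h.
have : \det (H^T *m H) = 1 by rewrite h det1.
by rewrite det_mulmx det_tr det_mulmx.
Qed.

Lemma crit_iff mu muc F Rm : is_SO Rm ->
  (critical_SO (Wt mu muc F) Rm <-> (Nm mu muc F Rm)^T = Nm mu muc F Rm).
Proof.
move=> [r1 r2]; have r3 : Rm *m Rm^T = 1%:M by apply: mulmx1C.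
split.
- move=> crit; apply: sym_of_J => i j ij.
  pose gamma := fun t => Rm *m (Hc i j t *m Hc i j t).
  pose A : 'M[R]_n := 2%:R *: Jm i j + 2%:R *: Jm i j.
  have hg : mx_has_deriv gamma 0 (Rm *m A).
    have h := mxd_mul (mxd_cst Rm 0) (mxd_mul (mxd_Hc i j) (mxd_Hc i j)).
    apply: mxd_eq; first apply: mxd_ext h => t; first by [].
    by rewrite mul0mx add0r Hc0 mulmx1 mul1mx.
  have g0 : gamma 0 = Rm by rewrite /gamma Hc0 mulmx1 mulmx1.
  have gSO : exists2 d, 0 < d & forall t, `|t| < d -> is_SO (gamma t).
    exists 1 => // t _; apply: SO_mul; first by [].
    by apply: orth_SO2; apply: Hc_orth.
  have d1 := crit gamma _ g0 gSO hg.
  have d2 := deriv_W mu muc F hg.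
  have := hd_unique d2 d1; rewrite g0 Dfun_skew; last first.
    have Jt : (Jm i j)^T = - Jm i j by rewrite /Jm trB !trmx_delta opprB.
    by rewrite /A trD !trZ Jt !scalerN opprD.
  move=> h; rewrite /A mulmxDl mxtraceD -!scalemxAl !mxtraceZ in h.
  have : 4%:R * \tr (Jm i j *m Nm mu muc F Rm) = 0 by rewrite -h; ring.
  move/eqP; rewrite mulf_eq0 pnatr_eq0 /= => /eqP; exact.
- move=> hN gamma V g0 [d dp hd] hg.
  pose A := Rm^T *m V.
  have eV : V = Rm *m A by rewrite /A mulmxA r3 mul1mx.
  have hA : A^T = - A.
    have e : V^T *m Rm + Rm^T *m V = 0.
      apply/matrixP => k l; rewrite [RHS]mxE.
      have h1 := mxd_mul (mxd_tr hg) hg k l.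
      have h2 : has_deriv (fun t => ((gamma t)^T *m gamma t) k l) 0 0.
        apply: (hd_loc dp _ (hd_cst (1%:M k l) 0)) => t; rewrite subr0 => /hd [-> _] //.
      by have := hd_unique h1 h2; rewrite g0.
    by rewrite /A trmx_mul trmxK; apply/eqP; rewrite -addr_eq0 e.
  have := deriv_W mu muc F hg; rewrite g0 eV Dfun_skew // tr_skew_sym //.
Qed.
End Alg.



Set Implicit Arguments. Unset Strict Implicit.
Section Fin.
Variables (R : realFieldType) (n : nat).

Lemma conj_eq (Rm X Y : 'M[R]_n) : Rm^T *m Rm = 1%:M ->
  (Rm *m X *m Rm^T = Rm *m Y *m Rm^T <-> X = Y).
Proof.
move=> r1; have r3 : Rm *m Rm^T = 1%:M by apply: mulmx1C.
split => [h|->] //.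
move: h => /(congr1 (fun M : 'M[R]_n => Rm^T *m M *m Rm)).
by rewrite !mulmxA r1 !mul1mx -!mulmxA r1 !mulmx1.
Qed.

Lemma scale_sym (c : R) (M : 'M[R]_n) : c != 0 -> ((c *: M)^T = c *: M <-> M^T = M).
Proof.
move=> c0; rewrite trZ; split => [h|->] //; exact: (scalerI c0 h).
Qed.

Lemma Nm_eq (mu muc : R) (F Rm : 'M[R]_n) : mu != 0 -> mu != muc ->
  Nm mu muc F Rm = (mu / ((mu - muc) / mu)) *: Nm 1 0 (Fhat mu muc F) Rm.
Proof.
move=> m0 mm; rewrite /Nm /Fhat -!scalemxAr -?scalemxAl -?scalemxAr.
set P := Rm^T *m F; set PP := P *m P.
have c0 : mu - muc != 0 by rewrite subr_eq0.
apply/matrixP => k l; rewrite !mxE.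
field; by rewrite m0 c0.
Qed.

Lemma final_eq (G Rm : 'M[R]_n) : Rm^T *m Rm = 1%:M ->
  ((Nm 1 0 G Rm)^T = Nm 1 0 G Rm <->
   G *m Rm^T *m G *m Rm^T - Rm *m G^T *m Rm *m G^T = 2%:R *: (G *m Rm^T - Rm *m G^T)).
Proof.
move=> r1; have r3 : Rm *m Rm^T = 1%:M by apply: mulmx1C.
have e1 : G *m Rm^T *m G *m Rm^T - Rm *m G^T *m Rm *m G^T
   = Rm *m ((Rm^T *m G) *m (Rm^T *m G) - (Rm^T *m G)^T *m (Rm^T *m G)^T) *m Rm^T.
  rewrite trmx_mul trmxK mulmxBr mulmxBl !mulmxA r3 mul1mx.
  by rewrite -(mulmxA (Rm *m G^T *m Rm *m G^T)) r3 mulmx1.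
have e2 : 2%:R *: (G *m Rm^T - Rm *m G^T)
   = Rm *m (2%:R *: ((Rm^T *m G) - (Rm^T *m G)^T)) *m Rm^T.
  rewrite trmx_mul trmxK -scalemxAr -scalemxAl mulmxBr mulmxBl !mulmxA r3 mul1mx.
  by rewrite -!(mulmxA _ Rm Rm^T) r3 !mulmx1.
rewrite e1 e2 conj_eq // /Nm trB !trZ.
move: (Rm^T *m G) => P.
rewrite (trmx_mul P P).
move: (P *m P) (P^T *m P^T) => Q Q'.
split => h; apply/matrixP => k l; have := congr1 (fun M : 'M[R]_n => M k l) h; rewrite /= !mxE => h';
  lra.
Qed.

End Fin.
Unset Implicit Arguments. Set Strict Implicit.

End Helpers.
Import Helpers.

Theorem mainTheorem4 (R : realFieldType) (n : nat) (F : 'M[R]_n) (mu muc : R) :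
  (2 <= n)%N -> is_GLplus F -> 0 < mu -> 0 <= muc ->
  (mu = muc ->
     forall Rm : 'M[R]_n, is_SO Rm ->
       (critical_SO (Wt mu muc F) Rm <-> F *m Rm^T = Rm *m F^T)) /\
  (mu <> muc ->
     forall Rm : 'M[R]_n, is_SO Rm ->
       (critical_SO (Wt mu muc F) Rm <-> critical_SO (Wt 1 0 (Fhat mu muc F)) Rm) /\
       (critical_SO (Wt 1 0 (Fhat mu muc F)) Rm <->
          Fhat mu muc F *m Rm^T *m Fhat mu muc F *m Rm^T
            - Rm *m (Fhat mu muc F)^T *m Rm *m (Fhat mu muc F)^T
          = 2%:R *: (Fhat mu muc F *m Rm^T - Rm *m (Fhat mu muc F)^T))).
Proof.
move=> _ _ mup _.
have m0 : mu != 0 by rewrite gt_eqF.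
split.
- move=> e Rm so; have [r1 _] := so.
  apply: (iff_trans (crit_iff mu muc F so)).
  rewrite /Nm -e subrr scale0r subr0.
  have hc : (2%:R * mu) != 0 by rewrite mulf_neq0 // pnatr_eq0.
  apply: (iff_trans (scale_sym _ hc)).
  have r3 : Rm *m Rm^T = 1%:M by apply: mulmx1C.
  have e1 : F *m Rm^T = Rm *m (Rm^T *m F) *m Rm^T by rewrite !mulmxA r3 mul1mx.
  have e2 : Rm *m F^T = Rm *m (Rm^T *m F)^T *m Rm^T.
    by rewrite trmx_mul trmxK !mulmxA -(mulmxA (Rm *m F^T)) r3 mulmx1.
  rewrite e1 e2; apply: (iff_trans _ (iff_sym (conj_eq _ _ r1))).
  by split=> h; apply: esym.
- move=> ne Rm so; have [r1 _] := so.
  have ne' : mu != muc by apply/eqP.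
  split.
  + apply: (iff_trans (crit_iff mu muc F so)).
    apply: iff_sym; apply: (iff_trans (crit_iff 1 0 (Fhat mu muc F) so)).
    rewrite (Nm_eq F Rm m0 ne'); apply: iff_sym; apply: scale_sym.
    rewrite mulf_neq0 // invr_eq0 mulf_neq0 // ?invr_eq0 //.
    by rewrite subr_eq0.
  + apply: (iff_trans (crit_iff _ _ _ so)); exact: final_eq.
Qed.
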